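(* Let $G$ be a mixed signed, directed graph on vertices $\{1,\dots,n\}$ with $m$ directed edges, and let $\widetilde{G}$ be its augmented signed graph, with artificial vertices indexed $t_1,\dots,t_m$. Regard $k[\widetilde{G}]\subseteq k[x_1^{\pm1},\dots,x_n^{\pm1},t_1^{\pm1},\dots,t_m^{\pm1}]$ and $k[G]\subseteq k[x_1^{\pm1},\dots,x_n^{\pm1}]$, and let $k(\widetilde G)$, $k(G)$ be their fraction fields inside $k(x_1,\dots,x_n,t_1,\dots,t_m)$. Then $k(\widetilde{G})\cap k(x_1,\dots,x_n)=k(G)$.
   Context: $k$ is a field. A mixed signed, directed graph $G$ on vertex set $\{1,\dots,n\}$ has a set of signed edges $+ij$ or $-ij$ (loops $\pm ii$ allowed) and directed edges $(i,j)$ with $i\ne j$; between a pair of vertices any subset of $+ij,-ij,(i,j),(j,i)$ may occur. Define $\rho(\pm ij)=\pm(e_i+e_j)$ (so $\rho(\pm ii)=\pm2e_i$) and $\rho((i,j))=e_j-e_i$ in $\mathbb{R}^n$. The edge ring is $k[G]=k[x^a: a\in\rho(E(G))]$ with $x^a=\prod x_i^{a_i}$. The augmented signed graph $\widetilde G$ is the signed graph obtained by replacing each directed edge $(i,j)$ by a new (artificial) vertex $t_{(i,j)}$ and the two edges $-i\,t_{(i,j)}$ and $+t_{(i,j)}\,j$; its edge ring is defined in the same way using variables $x_1,\dots,x_n$ and $t_1,\dots,t_m$ for the artificial vertices. *)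

(* Defs.v *)
From HB Require Import structures.
From mathcomp Require Import all_boot all_order all_algebra fraction.
Set Implicit Arguments. Unset Strict Implicit. Unset Printing Implicit Defensive.
Import Order.TTheory GRing.Theory Num.Theory.
Local Open Scope ring_scope.

(* Polynomial ring in N variables over an integral domain R, built as an
   iterated univariate polynomial ring: R[z_0,...,z_{N-1}]. *)
Fixpoint mpoly (R : idomainType) (N : nat) : idomainType :=
  if N is N'.+1 then ({poly mpoly R N'} : idomainType) else R.

(* the variable z_i (meaningful for i < N) *)
Fixpoint mvar (R : idomainType) (N : nat) (i : nat) : mpoly R N :=
  match N return mpoly R N with
  | 0 => 0
  | N'.+1 => if i == N' then 'X else (@mvar R N' i)%:P
  end.

Fixpoint mconst (R : idomainType) (N : nat) (c : R) : mpoly R N :=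
  match N return mpoly R N with
  | 0 => c
  | N'.+1 => (@mconst R N' c)%:P
  end.

Definition ratfun (k : fieldType) (N : nat) : fieldType := {fraction mpoly k N}.

Definition rvar (k : fieldType) (N : nat) (i : 'I_N) : ratfun k N :=
  FracField.tofrac (@mvar k N i).
Definition rconst (k : fieldType) (N : nat) (c : k) : ratfun k N :=
  FracField.tofrac (@mconst k N c).

Definition monomial (k : fieldType) (N : nat) (a : 'I_N -> int) : ratfun k N :=
  \prod_(i < N) @rvar k N i ^ (a i).

Inductive in_kalg (k : fieldType) (N : nat) (S : ratfun k N -> Prop)
  : ratfun k N -> Prop :=
| kalg_const c : in_kalg S (@rconst k N c)
| kalg_gen y : S y -> in_kalg S y
| kalg_add y z : in_kalg S y -> in_kalg S z -> in_kalg S (y + z)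
| kalg_mul y z : in_kalg S y -> in_kalg S z -> in_kalg S (y * z).

Definition in_kfrac (k : fieldType) (N : nat) (S : ratfun k N -> Prop)
  (f : ratfun k N) : Prop :=
  exists a b, [/\ in_kalg S a, in_kalg S b, b != 0 & f = a / b].

(* Edge vectors rho. A signed edge is (s, i, j) with s = true for +ij and
   s = false for -ij (loops i = j allowed); a directed edge is (i, j). *)
Definition rho_s (N : nat) (e : bool * 'I_N * 'I_N) : 'I_N -> int :=
  fun v => (if e.1.1 then 1 else -1) * ((v == e.1.2)%:Z + (v == e.2)%:Z).
Definition rho_d (N : nat) (e : 'I_N * 'I_N) : 'I_N -> int :=
  fun v => (v == e.2)%:Z - (v == e.1)%:Z.

(* A mixed signed, directed graph on {1..n} with m directed edges:
   S = set of signed edges, d : 'I_m -> 'I_n * 'I_n enumerates the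
   directed edges (injective, no loops). *)
Definition mixed_graph_wf (n m : nat) (S : {set bool * 'I_n * 'I_n})
  (d : 'I_m -> 'I_n * 'I_n) : Prop :=
  injective d /\ (forall e, (d e).1 != (d e).2).

(* vertices of the augmented graph: 'I_(n+m); x_i = lshift m i,
   t_e = rshift n e *)
Definition xv (n m : nat) (i : 'I_n) : 'I_(n + m) := lshift m i.
Definition tv (n m : nat) (e : 'I_m) : 'I_(n + m) := rshift n e.

Definition aug_edges (n m : nat) (S : {set bool * 'I_n * 'I_n})
  (d : 'I_m -> 'I_n * 'I_n) : {set bool * 'I_(n + m) * 'I_(n + m)} :=
  [set e | [|| [exists s in S, e == (s.1.1, @xv n m s.1.2, @xv n m s.2)],
               [exists t, e == (false, @xv n m (d t).1, @tv n m t)]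
             | [exists t, e == (true, @tv n m t, @xv n m (d t).2)]]].

Definition ext0 (n m : nat) (a : 'I_n -> int) : 'I_(n + m) -> int :=
  fun v => match split v with inl i => a i | inr _ => 0 end.

Definition gens_G (k : fieldType) (n m : nat) (S : {set bool * 'I_n * 'I_n})
  (d : 'I_m -> 'I_n * 'I_n) (f : ratfun k (n + m)) : Prop :=
  (exists2 e, e \in S & f = @monomial k (n + m) (@ext0 n m (@rho_s n e)))
  \/ (exists t, f = @monomial k (n + m) (@ext0 n m (@rho_d n (d t)))).

Definition gens_aug (k : fieldType) (n m : nat) (S : {set bool * 'I_n * 'I_n})
  (d : 'I_m -> 'I_n * 'I_n) (f : ratfun k (n + m)) : Prop :=
  exists2 e, e \in aug_edges S d & f = @monomial k (n + m) (@rho_s (n + m) e).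

Definition gens_x (k : fieldType) (n m : nat) (f : ratfun k (n + m)) : Prop :=
  exists i : 'I_n, f = @rvar k (n + m) (@xv n m i).

(* Main.v *)
Require Import Defs.
From HB Require Import structures.
From mathcomp Require Import all_boot all_order all_algebra fraction.
From mathcomp Require Import zify ring.
Set Implicit Arguments. Unset Strict Implicit. Unset Printing Implicit Defensive.
Import Order.TTheory GRing.Theory Num.Theory.
Local Open Scope ring_scope.

Section Basics.
Variable k : fieldType.

Fixpoint low (M N : nat) : mpoly k N -> Prop :=
  match N return mpoly k N -> Prop with
  | 0 => fun _ => True
  | N'.+1 => fun p => (M <= N')%N -> exists2 c, @low M N' c & p = c%:P
  end.

Lemma low0 M N : @low M N 0.
Proof. elim: N => //= N IH _; exists 0 => //; by rewrite polyC0. Qed.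
Lemma low1 M N : @low M N 1.
Proof. elim: N => //= N IH _; exists 1 => //; by rewrite polyC1. Qed.
Lemma lowD M N p q : @low M N p -> low M q -> low M (p + q).
Proof.
elim: N p q => //= N IH p q Hp Hq H.
case: (Hp H) => a Ha ->; case: (Hq H) => b Hb ->.
exists (a + b); [exact: IH | by rewrite polyCD].
Qed.
Lemma lowN M N p : @low M N p -> low M (- p).
Proof.
elim: N p => //= N IH p Hp H.
case: (Hp H) => a Ha ->; exists (- a); [exact: IH | by rewrite polyCN].
Qed.
Lemma lowM M N p q : @low M N p -> low M q -> low M (p * q).
Proof.
elim: N p q => //= N IH p q Hp Hq H.
case: (Hp H) => a Ha ->; case: (Hq H) => b Hb ->.
exists (a * b); [exact: IH | by rewrite polyCM].
Qed.
Lemma low_const M N c : @low M N (@mconst k N c).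
Proof. elim: N => //= N IH _; by exists (@mconst k N c). Qed.
Lemma low_mvar M N i : (i < M)%N -> @low M N (@mvar k N i).
Proof.
move=> iM; elim: N => //= N IH H.
have -> : (i == N) = false by apply/eqP; lia.
by exists (@mvar k N i).
Qed.
Lemma low_mono M M' N p : (M <= M')%N -> @low M N p -> @low M' N p.
Proof.
move=> le; elim: N p => //= N IH p Hp H.
have H' : (M <= N)%N by lia.
case: (Hp H') => c Hc ->; exists c => //; exact: IH.
Qed.
Lemma mvar_neq0 N i : (i < N)%N -> @mvar k N i != 0.
Proof.
elim: N => //= N IH iN.
case: ifP => [_|/eqP ne]; first by rewrite -size_poly_eq0 size_polyX.
rewrite polyC_eq0; apply: IH; lia.
Qed.
Lemma low_indep N M : (M < N)%N -> forall s (a : nat -> mpoly k N),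
  (forall i, (i < s)%N -> low M (a i)) ->
  \sum_(i < s) a i * @mvar k N M ^+ i = 0 -> forall i, (i < s)%N -> a i = 0.
Proof.
elim: N => // N IH MN s a Ha Hs.
have HM : (M <= N)%N by lia.
pose c i := (a i)`_0.
have ac : forall i, (i < s)%N -> low M (c i) /\ a i = (c i)%:P.
  move=> i Hi; rewrite /c; case: (Ha i Hi HM) => c' Hc ->; by rewrite coefC eqxx; split.
have Emv : @mvar k N.+1 M = (if M == N then 'X else (@mvar k N M)%:P) by [].
rewrite Emv in Hs.
change ((\sum_(i < s) (a i : {poly mpoly k N}) * (if M == N then 'X else (@mvar k N M)%:P) ^+ i) = 0 :> {poly mpoly k N}) in Hs.
have Hs' : \sum_(i < s) (c i)%:P * (if M == N then 'X else (@mvar k N M)%:P) ^+ i = 0.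
  apply: etrans Hs; apply: eq_bigr => i _; by rewrite -(ac i (ltn_ord i)).2.
move=> i Hi; rewrite (ac i Hi).2.
case: eqP Hs' => [_|ne] Hs'.
  have : (\poly_(j < s) c j)`_i = 0.
    rewrite poly_def.
    have -> : \sum_(j < s) c j *: 'X^j = 0.
      apply: etrans Hs'; apply: eq_bigr => j _; by rewrite mul_polyC.
    by rewrite coef0.
  by rewrite coef_poly Hi => ->; rewrite polyC0.
have : (\sum_(i < s) c i * (@mvar k N M) ^+ i)%:P = 0.
  apply: etrans Hs'; rewrite rmorph_sum; apply: eq_bigr => j _; rewrite rmorphM rmorphXn; reflexivity.
move/eqP; rewrite polyC_eq0 => /eqP H0.
have MN' : (M < N)%N by lia.
rewrite (IH MN' s c _ H0 i Hi) ?polyC0 //.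
by move=> j Hj; case: (ac j Hj).
Qed.
End Basics.

Section Frac.
Variables (k : fieldType) (N : nat).
Local Notation tf := (@FracField.tofrac (mpoly k N)).
Local Notation Om := (ratfun k N).

Definition Fl (M : nat) (f : Om) : Prop :=
  exists a b, [/\ @low k M N a, low M b, b != 0 & f = tf a / tf b].

Lemma tf_neq0 b : b != 0 -> tf b != 0.
Proof. by rewrite tofrac_eq0. Qed.

Lemma Fl_tf M a : low M a -> Fl M (tf a).
Proof. move=> Ha; exists a, 1; split => //; [exact: low1|exact: oner_neq0|by rewrite tofrac1 divr1]. Qed.

Lemma Fl_add M f g : Fl M f -> Fl M g -> Fl M (f + g).
Proof.
move=> [a [b [Ha Hb b0 ->]]] [c [d [Hc Hd d0 ->]]].
exists (a * d + c * b), (b * d); split.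
- by apply: lowD; apply: lowM.
- exact: lowM.
- by rewrite mulf_neq0.
- by rewrite tofracD !tofracM addf_div // tf_neq0.
Qed.

Lemma Fl_mul M f g : Fl M f -> Fl M g -> Fl M (f * g).
Proof.
move=> [a [b [Ha Hb b0 ->]]] [c [d [Hc Hd d0 ->]]].
exists (a * c), (b * d); split.
- exact: lowM.
- exact: lowM.
- by rewrite mulf_neq0.
- by rewrite !tofracM mulf_div.
Qed.

Lemma Fl_opp M f : Fl M f -> Fl M (- f).
Proof.
move=> [a [b [Ha Hb b0 ->]]]; exists (- a), b; split => //; first exact: lowN.
by rewrite tofracN mulNr.
Qed.

Lemma Fl_inv M f : Fl M f -> Fl M f^-1.
Proof.
move=> [a [b [Ha Hb b0 ->]]].
case: (eqVneq a 0) => [->|a0].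
  by rewrite tofrac0 mul0r invr0; apply: Fl_tf; apply: low0.
exists b, a; split => //; by rewrite invf_div.
Qed.

Lemma Fl_mono M M' f : (M <= M')%N -> Fl M f -> Fl M' f.
Proof.
move=> le [a [b [Ha Hb b0 ->]]]; exists a, b; split => //; exact: low_mono Ha || exact: low_mono Hb.
Qed.

Lemma Fl_expz M f (z : int) : Fl M f -> Fl M (f ^ z).
Proof.
move=> Hf.
have Hn : forall n, Fl M (f ^+ n).
  elim=> [|n IH]; first by rewrite expr0; apply: Fl_tf; apply: low1.
  by rewrite exprS; apply: Fl_mul.
case: z => n; first exact: Hn.
exact: Fl_inv.
Qed.

Lemma Fl_common M s (a : nat -> Om) : (forall i, (i < s)%N -> Fl M (a i)) ->
  exists b (al : nat -> mpoly k N), [/\ low M b, b != 0 &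
     forall i, (i < s)%N -> low M (al i) /\ a i = tf (al i) / tf b].
Proof.
elim: s => [|s IH] Ha.
  exists 1, (fun _ => 0); split => //; [exact: low1 | exact: oner_neq0].
have [b [al [Hb b0 Hal]]] : exists b (al : nat -> mpoly k N), [/\ low M b, b != 0 &
     forall i, (i < s)%N -> low M (al i) /\ a i = tf (al i) / tf b].
  by apply: IH => i Hi; apply: Ha; lia.
have [c [d [Hc Hd d0 Ea]]] := Ha s (ltnSn s).
exists (b * d), (fun i => if (i < s)%N then al i * d else c * b); split.
- exact: lowM.
- by rewrite mulf_neq0.
move=> i Hi; case: ifP => His.
  have [H1 ->] := Hal i His; split; first exact: lowM.
  by rewrite !tofracM -mulf_div divff ?mulr1 // tf_neq0.
have -> : i = s by lia.
split; first exact: lowM.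
by rewrite Ea !tofracM (mulrC (tf b) (tf d)) -mulf_div divff ?mulr1 // tf_neq0.
Qed.

End Frac.

Section Trans.
Variables (k : fieldType) (N : nat).
Local Notation tf := (@FracField.tofrac (mpoly k N)).
Local Notation Om := (ratfun k N).

Lemma Fl_transc M : (M < N)%N -> forall c : Om, Fl M c -> c != 0 ->
  forall h : {poly Om}, (forall i, Fl M h`_i) ->
  h.[c * tf (@mvar k N M)] = 0 -> h = 0.
Proof.
move=> MN c Hc c0 h Hh Hz.
pose s := size h.
pose a i := h`_i * c ^+ i.
have Ha : forall i, (i < s)%N -> Fl M (a i).
  by move=> i _; apply: Fl_mul => //; exact: (Fl_expz i%:Z Hc).
have [b [al [Hb b0 Hal]]] := Fl_common Ha.
have E : h.[c * tf (@mvar k N M)] = tf (\sum_(i < s) al i * @mvar k N M ^+ i) / tf b.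
  rewrite horner_coef rmorph_sum mulr_suml; apply: eq_bigr => i _.
  rewrite exprMn mulrA.
  have -> : h`_i * c ^+ i = a i by [].
  rewrite (Hal i (ltn_ord i)).2 rmorphM rmorphXn; by rewrite mulrAC.
rewrite E in Hz.
have Hz' : tf (\sum_(i < s) al i * @mvar k N M ^+ i) = 0.
  move/eqP: Hz; rewrite mulf_eq0 invr_eq0 (negbTE (tf_neq0 b0)) orbF => /eqP //.
move/eqP: Hz'; rewrite tofrac_eq0 => /eqP Hz'.
have al0 := low_indep MN (fun i Hi => (Hal i Hi).1) Hz'.
apply/polyP => i; rewrite coef0.
case: (ltnP i s) => Hi; last by rewrite nth_default.
have : a i = 0 by rewrite (Hal i Hi).2 al0 // tofrac0 mul0r.
by move/eqP; rewrite mulf_eq0 expf_eq0 (negbTE c0) andbF orbF => /eqP.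
Qed.
End Trans.

Section Kalg.
Variables (k : fieldType) (N : nat).
Local Notation tf := (@FracField.tofrac (mpoly k N)).
Local Notation Om := (ratfun k N).

Lemma mconst0 M : @mconst k M 0 = 0.
Proof. elim: M => //= M ->; by rewrite polyC0. Qed.
Lemma mconst1 M : @mconst k M 1 = 1.
Proof. elim: M => //= M ->; by rewrite polyC1. Qed.

Lemma kalg0 (T : Om -> Prop) : in_kalg T 0.
Proof. have := kalg_const T 0; by rewrite /rconst mconst0 tofrac0. Qed.
Lemma kalg1 (T : Om -> Prop) : in_kalg T 1.
Proof. have := kalg_const T 1; by rewrite /rconst mconst1 tofrac1. Qed.

Lemma kalg_sub (T T' : Om -> Prop) : (forall y, T y -> in_kalg T' y) ->
  forall y, in_kalg T y -> in_kalg T' y.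
Proof.
move=> H y; elim=> {y} [c|y Ty|y z _ Hy _ Hz|y z _ Hy _ Hz].
- exact: kalg_const. - exact: H. - exact: kalg_add. - exact: kalg_mul.
Qed.

Lemma kfrac_kalg (T : Om -> Prop) y : in_kalg T y -> in_kfrac T y.
Proof. move=> Hy; exists y, 1; split => //; [exact: kalg1|exact: oner_neq0|by rewrite divr1]. Qed.

Lemma kfrac_add (T : Om -> Prop) f g : in_kfrac T f -> in_kfrac T g -> in_kfrac T (f + g).
Proof.
move=> [a [b [Ha Hb b0 ->]]] [c [d [Hc Hd d0 ->]]].
exists (a * d + c * b), (b * d); split.
- by apply: kalg_add; apply: kalg_mul.
- exact: kalg_mul.
- by rewrite mulf_neq0.
- by rewrite addf_div.
Qed.

Lemma kfrac_mul (T : Om -> Prop) f g : in_kfrac T f -> in_kfrac T g -> in_kfrac T (f * g).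
Proof.
move=> [a [b [Ha Hb b0 ->]]] [c [d [Hc Hd d0 ->]]].
exists (a * c), (b * d); split.
- exact: kalg_mul. - exact: kalg_mul. - by rewrite mulf_neq0. - by rewrite mulf_div.
Qed.

Lemma kfrac_inv (T : Om -> Prop) f : in_kfrac T f -> in_kfrac T f^-1.
Proof.
move=> [a [b [Ha Hb b0 ->]]].
case: (eqVneq a 0) => [->|a0].
  by rewrite mul0r invr0; apply: kfrac_kalg; apply: kalg0.
exists b, a; split => //; by rewrite invf_div.
Qed.

Lemma kfrac_expz (T : Om -> Prop) f (z : int) : in_kfrac T f -> in_kfrac T (f ^ z).
Proof.
move=> Hf.
have Hn : forall n, in_kfrac T (f ^+ n).
  elim=> [|n IH]; first by rewrite expr0; apply: kfrac_kalg; apply: kalg1.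
  by rewrite exprS; apply: kfrac_mul.
case: z => n; first exact: Hn.
exact: kfrac_inv.
Qed.

Lemma kfrac_sub (T T' : Om -> Prop) : (forall y, T y -> in_kfrac T' y) ->
  forall y, in_kfrac T y -> in_kfrac T' y.
Proof.
move=> H.
have Ha : forall y, in_kalg T y -> in_kfrac T' y.
  move=> y; elim=> {y} [c|y Ty|y z _ Hy _ Hz|y z _ Hy _ Hz].
  - by apply: kfrac_kalg; apply: kalg_const.
  - exact: H. - exact: kfrac_add. - exact: kfrac_mul.
move=> y [a [b [Ha' Hb b0 ->]]].
by apply: kfrac_mul; [apply: Ha | apply: kfrac_inv; apply: Ha].
Qed.

Lemma Fl_kalg M (T : Om -> Prop) : (forall y, T y -> Fl M y) ->
  forall y, in_kalg T y -> Fl M y.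
Proof.
move=> H y; elim=> {y} [c|y Ty|y z _ Hy _ Hz|y z _ Hy _ Hz].
- by apply: Fl_tf; apply: low_const.
- exact: H. - exact: Fl_add. - exact: Fl_mul.
Qed.

Lemma kalg_sum (T : Om -> Prop) s (F : nat -> Om) :
  (forall i, (i < s)%N -> in_kalg T (F i)) -> in_kalg T (\sum_(i < s) F i).
Proof.
move=> H; apply: (big_ind (in_kalg T)); [exact: kalg0 | exact: kalg_add | ].
move=> i _; exact: H.
Qed.

Lemma kalg_natr (T : Om -> Prop) (b : nat) : in_kalg T b%:R.
Proof. elim: b => [|b IH]; [exact: kalg0 | rewrite mulrS; apply: kalg_add => //; exact: kalg1]. Qed.

Lemma rvar_neq0 (i : 'I_N) : @rvar k N i != 0.
Proof. by rewrite /rvar tofrac_eq0 mvar_neq0. Qed.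

End Kalg.

Section Graph.
Variables (k : fieldType) (n m : nat) (S : {set bool * 'I_n * 'I_n})
  (d : 'I_m -> 'I_n * 'I_n).
Local Notation N := (n + m).
Local Notation Om := (ratfun k N).
Local Notation tf := (@FracField.tofrac (mpoly k N)).

Lemma xv_eq i j : (@xv n m i == @xv n m j) = (i == j).
Proof. by rewrite -val_eqE /= val_eqE. Qed.
Lemma tv_eq i j : (@tv n m i == @tv n m j) = (i == j).
Proof. rewrite -val_eqE /= -val_eqE /=; apply/eqP/eqP => H; lia. Qed.
Lemma xv_tv i j : (@xv n m i == @tv n m j) = false.
Proof. rewrite -val_eqE /=; apply/eqP; have := ltn_ord i; lia. Qed.
Lemma tv_xv i j : (@tv n m i == @xv n m j) = false.
Proof. rewrite -val_eqE /=; apply/eqP; have := ltn_ord j; lia. Qed.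

Lemma ext0_eq (a : 'I_n -> int) (b : 'I_N -> int) :
  (forall i, b (@xv n m i) = a i) -> (forall j, b (@tv n m j) = 0) -> @ext0 n m a =1 b.
Proof.
move=> Hx Ht v; rewrite /ext0; case: splitP => [i Hi|j Hj].
  have -> : v = @xv n m i by apply: val_inj. by rewrite Hx.
have -> : v = @tv n m j by apply: val_inj. by rewrite Ht.
Qed.

Lemma monomial_ext (a b : 'I_N -> int) : a =1 b -> @monomial k N a = monomial k b.
Proof. by move=> H; rewrite /monomial; apply: eq_bigr => v _; rewrite H. Qed.

Lemma monomialD (a b : 'I_N -> int) :
  @monomial k N (fun v => a v + b v) = monomial k a * monomial k b.
Proof.
rewrite /monomial -big_split; apply: eq_bigr => v _.
by rewrite expfzDr // rvar_neq0.
Qed.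

Lemma monomial_delta (p : 'I_N) (z : int) :
  @monomial k N (fun v => (v == p)%:Z * z) = rvar k p ^ z.
Proof.
rewrite /monomial (bigD1 p) //= eqxx mul1r big1 ?mulr1 //.
by move=> v /negbTE ->; rewrite mul0r expr0z.
Qed.

Lemma monomial_rho_s (e : bool * 'I_N * 'I_N) :
  @monomial k N (rho_s e) =
  rvar k e.1.2 ^ (if e.1.1 then 1 else -1) * rvar k e.2 ^ (if e.1.1 then 1 else -1).
Proof.
rewrite -!monomial_delta -monomialD; apply: monomial_ext => v.
by rewrite /rho_s mulrDr !(mulrC (if e.1.1 then _ else _)).
Qed.

Lemma mono_rho_d (t : 'I_m) :
  @monomial k N (@ext0 n m (rho_d (d t))) =
  monomial k (rho_s (false, @xv n m (d t).1, @tv n m t)) *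
  monomial k (rho_s (true, @tv n m t, @xv n m (d t).2)).
Proof.
rewrite -monomialD; apply: monomial_ext; apply: ext0_eq => [i|j].
  rewrite /rho_s /rho_d /= !xv_eq !xv_tv.
  by case: (i == _); case: (i == _).
rewrite /rho_s /= !tv_xv tv_eq.
by case: (j == t).
Qed.

Lemma mono_rho_s (s : bool * 'I_n * 'I_n) :
  @monomial k N (@ext0 n m (rho_s s)) =
  monomial k (rho_s (s.1.1, @xv n m s.1.2, @xv n m s.2)).
Proof.
apply: monomial_ext; apply: ext0_eq => [i|j].
  by rewrite /rho_s /= !xv_eq.
by rewrite /rho_s /= !tv_xv mulr0.
Qed.

End Graph.

Section Main.
Variables (k : fieldType) (n m : nat) (S : {set bool * 'I_n * 'I_n})
  (d : 'I_m -> 'I_n * 'I_n).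
Local Notation N := (n + m).
Local Notation Om := (ratfun k N).
Local Notation tf := (@FracField.tofrac (mpoly k N)).

Definition uu (t : 'I_m) : Om := rvar k (@xv n m (d t).1) * rvar k (@tv n m t).
Definition Se (e : nat) (y : Om) : Prop :=
  @gens_G k n m S d y \/ exists t : 'I_m, (t < e)%N /\ (y = uu t \/ y = (uu t)^-1).

Lemma uu_neq0 t : uu t != 0.
Proof. by rewrite mulf_neq0 ?rvar_neq0. Qed.

Lemma Fl1 M : @Fl k N M 1.
Proof. have := @Fl_tf k N M 1 (low1 _ _ _); by rewrite tofrac1. Qed.

Lemma ext0_Fl (a : 'I_n -> int) : @Fl k N n (monomial k (@ext0 n m a)).
Proof.
rewrite /monomial; apply: (big_ind (@Fl k N n)); [exact: Fl1 | by move=> x y; apply: Fl_mul | ].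
move=> v _; rewrite /ext0; case: splitP => [i Hi|j Hj]; last by rewrite expr0z; apply: Fl1.
apply: Fl_expz; apply: Fl_tf; apply: low_mvar; by rewrite Hi.
Qed.

Lemma ext0_kfrac (a : 'I_n -> int) : in_kfrac (@gens_x k n m) (monomial k (@ext0 n m a)).
Proof.
rewrite /monomial; apply: (big_ind (in_kfrac (@gens_x k n m))).
- by apply: kfrac_kalg; apply: kalg1.
- by move=> x y; apply: kfrac_mul.
move=> v _; rewrite /ext0; case: splitP => [i Hi|j Hj];
  last by rewrite expr0z; apply: kfrac_kalg; apply: kalg1.
apply: kfrac_expz; apply: kfrac_kalg; apply: kalg_gen; exists i.
by congr (rvar k _); apply: val_inj.
Qed.

Lemma gensG_Fl y : @gens_G k n m S d y -> @Fl k N n y.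
Proof. by case=> [[e _ ->]|[t ->]]; apply: ext0_Fl. Qed.

Lemma gensG_kfrac y : @gens_G k n m S d y -> in_kfrac (@gens_x k n m) y.
Proof. by case=> [[e _ ->]|[t ->]]; apply: ext0_kfrac. Qed.

Lemma gensG_aug y : @gens_G k n m S d y -> in_kalg (@gens_aug k n m S d) y.
Proof.
case=> [[s Hs ->]|[t ->]].
  apply: kalg_gen; exists (s.1.1, @xv n m s.1.2, @xv n m s.2); last exact: mono_rho_s.
  rewrite inE; apply/orP; left; apply/existsP; exists s; by rewrite Hs eqxx.
rewrite mono_rho_d; apply: kalg_mul; apply: kalg_gen.
  eexists; last reflexivity.
  rewrite inE; apply/orP; right; apply/orP; left; apply/existsP; exists t; by rewrite eqxx.
eexists; last reflexivity.
rewrite inE; apply/orP; right; apply/orP; right; apply/existsP; exists t; by rewrite eqxx.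
Qed.

Lemma aug_Se y : @gens_aug k n m S d y -> in_kalg (Se m) y.
Proof.
case=> e; rewrite inE => /or3P [/existsP [s /andP [Hs /eqP ->]]|/existsP [t /eqP ->]|/existsP [t /eqP ->]] ->.
- apply: kalg_gen; left; left; exists s => //; by rewrite mono_rho_s.
- apply: kalg_gen; right; exists t; split => //; right.
  by rewrite monomial_rho_s /= !exprN1 /uu invfM.
- have -> : monomial k (rho_s (true, @tv n m t, @xv n m (d t).2)) =
            uu t * monomial k (@ext0 n m (rho_d (d t))).
    rewrite mono_rho_d !monomial_rho_s /= !exprN1 !expr1z /uu -invfM.
    rewrite mulrA divff ?mul1r //.
    by rewrite mulf_neq0 ?rvar_neq0.
  apply: kalg_mul; apply: kalg_gen; [right; exists t; split => //; by left | left; right; by exists t].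
Qed.

Lemma Se_Fl e y : (e <= m)%N -> Se e y -> @Fl k N (n + e) y.
Proof.
move=> em [Hy|[t [te Hy]]].
  by apply: (Fl_mono (leq_addr _ _)); apply: gensG_Fl.
have Hu : @Fl k N (n + e) (uu t).
  rewrite /uu /rvar; apply: Fl_mul; apply: Fl_tf; apply: low_mvar => /=.
    have := ltn_ord (d t).1; lia.
  lia.
by case: Hy => ->; [|apply: Fl_inv].
Qed.

Lemma Se_const e y : in_kalg (Se e) y -> exists r (p : {poly Om}),
  (forall i, in_kalg (Se e) p`_i) /\ forall w : Om, y * w ^+ r = p.[w].
Proof.
move=> Hy; exists 0%N, y%:P; split.
  by move=> i; rewrite coefC; case: ifP => _ //; apply: kalg0.
by move=> w; rewrite expr0 mulr1 hornerC.
Qed.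

Lemma Se_decomp e (He : (e < m)%N) g : in_kalg (Se e.+1) g ->
  exists r (p : {poly Om}), (forall i, in_kalg (Se e) p`_i) /\
     g * (uu (Ordinal He)) ^+ r = p.[uu (Ordinal He)].
Proof.
set w := uu (Ordinal He).
elim=> {g} [c|y Hy|y z _ [r1 [p1 [Hp1 E1]]] _ [r2 [p2 [Hp2 E2]]]
           |y z _ [r1 [p1 [Hp1 E1]]] _ [r2 [p2 [Hp2 E2]]]].
- have [r [p [Hp E]]] := Se_const (kalg_const (Se e) c); by exists r, p.
- case: Hy => [HG|[t [te Ht]]].
    have [r [p [Hp E]]] := Se_const (kalg_gen (or_introl HG) : in_kalg (Se e) y).
    by exists r, p.
  case: (ltnP t e) => tlt.
    have HS : Se e y by right; exists t.
    have [r [p [Hp E]]] := Se_const (kalg_gen HS); by exists r, p.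
  have teq : t = Ordinal He by apply: val_inj => /=; lia.
  rewrite teq -/w in Ht; case: Ht => ->.
    exists 0%N, 'X; split; first by move=> i; rewrite coefX; apply: kalg_natr.
    by rewrite expr0 mulr1 hornerX.
  exists 1%N, 1; split; first by move=> i; rewrite coef1; apply: kalg_natr.
  by rewrite expr1 mulVf ?uu_neq0 // hornerC.
- exists (r1 + r2)%N, (p1 * 'X^r2 + p2 * 'X^r1); split.
    move=> i; rewrite coefD !coefMXn; apply: kalg_add; case: ifP => _ //; exact: kalg0.
  rewrite hornerD !hornerM !hornerXn -E1 -E2 exprD.
  by rewrite mulrDl -!mulrA [w ^+ r2 * _]mulrC.
- exists (r1 + r2)%N, (p1 * p2); split.
    move=> i; rewrite coefM; apply: (big_ind (in_kalg (Se e))); [exact: kalg0 | exact: kalg_add | ] => j _; exact: kalg_mul.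
  by rewrite hornerM -E1 -E2 exprD mulrACA.
Qed.

Lemma Se_step e (He : (e < m)%N) f : @Fl k N (n + e) f ->
  in_kfrac (Se e.+1) f -> in_kfrac (Se e) f.
Proof.
move=> Hf [A [B [HA HB B0 Ef]]].
set w := uu (Ordinal He).
have [r1 [p [Hp E1]]] := Se_decomp He HA.
have [r2 [q [Hq E2]]] := Se_decomp He HB.
rewrite -/w in E1 E2.
set P := p * 'X^r2. set Q := q * 'X^r1.
have HP : forall i, in_kalg (Se e) P`_i.
  by move=> i; rewrite coefMXn; case: ifP => _; [exact: kalg0 | exact: Hp].
have HQ : forall i, in_kalg (Se e) Q`_i.
  by move=> i; rewrite coefMXn; case: ifP => _; [exact: kalg0 | exact: Hq].
have EQ : f * Q.[w] = P.[w].
  rewrite !hornerM !hornerXn -E1 -E2 Ef.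
  by rewrite -!mulrA mulKf // (mulrC (w ^+ r2)).
have Q0 : Q != 0.
  apply/eqP => HQ0.
  have : Q.[w] = B * w ^+ r2 * w ^+ r1 by rewrite hornerM hornerXn -E2.
  rewrite HQ0 horner0 => /esym/eqP; rewrite !mulf_eq0 (negbTE B0) !expf_eq0.
  by rewrite (negbTE (uu_neq0 _)) !andbF.
have em : (e <= m)%N by lia.
have FlS : forall y, in_kalg (Se e) y -> @Fl k N (n + e) y.
  by apply: Fl_kalg => y; apply: Se_Fl.
set h := f *: Q - P.
have Hh : forall i, @Fl k N (n + e) h`_i.
  move=> i; rewrite coefB coefZ; apply: Fl_add; last by apply: Fl_opp; apply: FlS.
  by apply: Fl_mul => //; apply: FlS.
have h0 : h.[w] = 0 by rewrite hornerD hornerN hornerZ EQ subrr.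
have Hc : @Fl k N (n + e) (rvar k (@xv n m (d (Ordinal He)).1)).
  rewrite /rvar; apply: Fl_tf; apply: low_mvar => /=.
  have := ltn_ord (d (Ordinal He)).1; lia.
have nN : (n + e < N)%N by lia.
have hz := Fl_transc nN Hc (@rvar_neq0 k N _) Hh h0.
pose i := (size Q).-1.
have Ei : f * Q`_i = P`_i.
  have : h`_i = 0 by rewrite hz coef0.
  by rewrite coefB coefZ => /eqP; rewrite subr_eq0 => /eqP.
have Qi0 : Q`_i != 0 by rewrite -lead_coefE lead_coef_eq0.
exists P`_i, Q`_i; split => //.
by rewrite -Ei mulfK.
Qed.

End Main.

Theorem mainTheorem7 (k : fieldType) (n m : nat)
  (S : {set bool * 'I_n * 'I_n}) (d : 'I_m -> 'I_n * 'I_n) :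
  mixed_graph_wf S d ->
  forall f : ratfun k (n + m),
    (in_kfrac (@gens_aug k n m S d) f /\ in_kfrac (@gens_x k n m) f)
    <-> in_kfrac (@gens_G k n m S d) f.
Proof.
move=> _ f; split.
  move=> [Haug Hx].
  have Fn : @Fl k (n + m) n f.
    move: Hx => [a [b [Ha Hb b0 ->]]].
    have H : forall y, in_kalg (@gens_x k n m) y -> @Fl k (n + m) n y.
      apply: Fl_kalg => y [i ->]; rewrite /rvar; apply: Fl_tf; apply: low_mvar => /=.
      exact: ltn_ord.
    by apply: Fl_mul; [apply: H | apply: Fl_inv; apply: H].
  have Hm : in_kfrac (Se S d m) f.
    by apply: (kfrac_sub _ Haug) => y Hy; apply: kfrac_kalg; apply: aug_Se.
  have H0 : forall e, (e <= m)%N -> in_kfrac (Se S d e) f -> in_kfrac (Se S d 0) f.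
    elim=> [//|e IH] He Hf.
    apply: IH; first by lia.
    have He' : (e < m)%N by lia.
    apply: (Se_step He') => //.
    by apply: (Fl_mono _ Fn); lia.
  apply: (kfrac_sub _ (H0 m (leqnn m) Hm)) => y [Hy|[t [t0 _]]] //.
  by apply: kfrac_kalg; apply: kalg_gen.
move=> HG; split.
  by apply: (kfrac_sub _ HG) => y Hy; apply: kfrac_kalg; apply: gensG_aug.
apply: (kfrac_sub (T := gens_G S d) _ HG) => y Hy. exact: (@gensG_kfrac k n m S d y Hy).
Qed.
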